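(* For $k\ge4$ and $n>k(k-1)$, $$\frac{n^k-k^3n^{k-2}}{k^k-k}\le g_k(n)\le\frac{n^k-n}{k^k-k}.$$
   Context: The function $g_k$ is defined by: $g_k(s)=0$ for $0\le s<k$, and for $s\ge k\ge 3$, $g_k(s)=\max\left(\sum_{i=1}^k g_k(s_i)+\prod_{i=1}^k s_i\right)$, the maximum over all partitions $s_1+\dots+s_k=s$ into nonnegative integers with $s_i<s$ for each $i$. *)

(* Defs.v *)
From mathcomp Require Import all_boot all_order all_algebra.
Set Implicit Arguments. Unset Strict Implicit. Unset Printing Implicit Defensive.

(* Fuel-based auxiliary: gk_fuel k fuel s.  A partition s_1+...+s_k = s into
   nonnegative integers with each s_i < s is a finite function
   f : 'I_k -> 'I_s with \sum_i f i = s. *)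
Fixpoint gk_fuel (k fuel s : nat) : nat :=
  match fuel with
  | 0 => 0
  | fuel'.+1 =>
      if s < k then 0
      else \max_(f : {ffun 'I_k -> 'I_s} | \sum_(i < k) (f i : nat) == s)
             (\sum_(i < k) gk_fuel k fuel' (f i) + \prod_(i < k) (f i : nat))
  end.

(* g_k(s): fuel s.+1 suffices since all recursive arguments are < s. *)
Definition g (k s : nat) : nat := gk_fuel k s.+1 s.

(* Main.v *)
Require Import Defs.
From mathcomp Require Import all_boot all_order all_algebra.
From mathcomp Require Import zify ring lra.
Import Order.TTheory GRing.Theory Num.Theory.

Lemma gk_fuel_g k : forall s fuel, s < fuel -> gk_fuel k fuel s = g k s.
Proof.
elim/ltn_ind=> s IH [|fuel] //= Hs.
rewrite /g /=; case: ltnP => // _.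
apply: eq_bigr => f _; congr (_ + _); apply: eq_bigr => i _.
have lt := ltn_ord (f i).
rewrite IH //; last by apply: leq_trans lt _.
by rewrite (IH _ lt) // ltnSn.
Qed.

Lemma g_small k s : s < k -> g k s = 0.
Proof. by move=> h; rewrite /g /= h. Qed.

Lemma g_rec k s : k <= s -> g k s =
  \max_(f : {ffun 'I_k -> 'I_s} | \sum_(i < k) (f i : nat) == s)
     (\sum_(i < k) g k (f i) + \prod_(i < k) (f i : nat)).
Proof.
move=> h; rewrite {1}/g /= ltnNge h /=.
apply: eq_bigr => f _; congr (_ + _); apply: eq_bigr => i _.
by rewrite gk_fuel_g.
Qed.

Section SB.
Local Open Scope ring_scope.

Lemma amgm (I : finType) (a : I -> rat) (P : rat) :
  (forall i, 0 <= a i) -> 0 <= P -> \prod_i a i = P ^+ #|I| ->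
  #|I|%:R * P <= \sum_i a i.
Proof.
move=> a0 P0 hP.
have [n0|npos] := posnP #|I|.
  by rewrite n0 mul0r sumr_ge0.
have H := Order.le_of_leif (leif_AGM (A := predT) (fun i _ => a0 i)).
move: H; rewrite /= cardT -cardE hP (ler_pXn2r npos) ?nnegrE//; last first.
  by rewrite divr_ge0 ?sumr_ge0.
by rewrite ler_pdivlMr ?ltr0n // mulrC.
Qed.

End SB.

Section SD.
Local Open Scope ring_scope.

Lemma weier (k r : rat) (a : nat -> rat) n :
  0 <= r -> r <= k -> (forall l, (l < n)%N -> 0 <= a l /\ a l <= r) ->
  \prod_(l < n) ((k - a l) * r) * (r - \sum_(l < n) a l)
    <= r * \prod_(l < n) (k * (r - a l)).
Proof.
move=> r0 rk; elim: n => [|n IH] ha.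
  by rewrite !big_ord0 subr0 mul1r mulr1.
have [a0 ar] := ha n (ltnSn n).
have IH' := IH (fun l hl => ha l (ltnW hl)).
rewrite !big_ord_recr /=.
set PA := \prod_(i < n) (k * (r - a i)).
set PB := \prod_(i < n) ((k - a i) * r).
set S := \sum_(i < n) a i.
have S0 : 0 <= S by apply: sumr_ge0 => i _; case: (ha i (ltnW (ltn_ord i))).
have PB0 : 0 <= PB.
  apply: prodr_ge0 => i _; case: (ha i (ltnW (ltn_ord i))) => h1 h2.
  apply: mulr_ge0 => //; lra.
have An : 0 <= k * (r - a n) by apply: mulr_ge0; lra.
have key : PB * ((k - a n) * r) * (r - (S + a n)) <= PB * (r - S) * (k * (r - a n)).
  rewrite -!mulrA; apply: ler_wpM2l => //.
  have : 0 <= a n * (S * (k - r) + r * (r - a n)).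
    apply: mulr_ge0 => //; apply: addr_ge0; apply: mulr_ge0; lra.
  nra.
apply: (le_trans key).
rewrite [X in _ <= X]mulrA; apply: ler_wpM2r => //.
Qed.

End SD.

Section SE.
Local Open Scope ring_scope.

Lemma ffact_prod (n m : nat) : (n ^_ m = \prod_(l < m) (n - l))%N.
Proof.
elim: m => [|m IH]; first by rewrite big_ord0 ffactn0.
by rewrite ffactnSr big_ord_recr /= IH.
Qed.

Lemma sum_l2 (i : nat) : 2 * \sum_(l < i) (l.+2)%:R = (i * (i + 3))%:R :> rat.
Proof.
elim: i => [|i IH]; first by rewrite big_ord0 mulr0.
rewrite big_ord_recr /= mulrDr IH -natrM -natrD; congr (_%:R); lia.
Qed.

Lemma termT_main (K i r : nat) : (i <= K)%N -> (i.+2 <= r)%N -> (r <= K.+2)%N ->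
  2 * ((K.+2)%:R * ((K.+2)%:R - 1) * (K ^_ i)%:R * (r%:R ^+ i * r%:R ^+ 2))
   <= 2 * ((K.+2)%:R ^+ i * (K.+2)%:R ^+ 2 * (r%:R * (r%:R - 1) * ((r.-2) ^_ i)%:R))
      + (K.+2)%:R ^+ 3 * ((K ^_ i)%:R * ((i.+2 * i.+1)%:R)) * r%:R ^+ i :> rat.
Proof.
move=> iK ir rK.
set kk := (K.+2)%:R : rat. set rr := r%:R : rat.
set F := (K ^_ i)%:R : rat. set G := ((r.-2) ^_ i)%:R : rat.
pose S := \sum_(l < i) (l.+2)%:R : rat.
have W := @weier kk rr (fun l => (l.+2)%:R) i.
have r0 : 0 <= rr by rewrite /rr ler0n.
have rk : rr <= kk by rewrite /rr /kk ler_nat.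
have W' : F * rr ^+ i * (rr - S) <= rr * (kk ^+ i * G).
  have := W r0 rk.
  have ha : forall l, (l < i)%N -> 0 <= (l.+2)%:R :> rat /\ (l.+2)%:R <= rr.
    by move=> l li; split; rewrite ?ler0n // /rr ler_nat; lia.
  move=> /(_ ha).
  have -> : \prod_(l < i) ((kk - (l.+2)%:R) * rr) = F * rr ^+ i.
    rewrite big_split /= prodr_const card_ord /F ffact_prod natr_prod.
    congr (_ * _); apply: eq_bigr => l _; have := ltn_ord l => hl.
    rewrite /kk -natrB; last lia.
    congr (_%:R); lia.
  have -> : \prod_(l < i) (kk * (rr - (l.+2)%:R)) = kk ^+ i * G.
    rewrite big_split /= prodr_const card_ord /G ffact_prod natr_prod.
    congr (_ * _); apply: eq_bigr => l _; have := ltn_ord l => hl.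
    rewrite /rr -natrB; last lia.
    congr (_%:R); lia.
  done.
have S2 : 2 * S = (i * (i + 3))%:R by rewrite sum_l2.
set J := (i.+2 * i.+1)%:R : rat.
have JS : J = 2 * S + 2 by rewrite S2 /J -natrD; congr (_%:R); lia.
have J2 : 2 <= J by rewrite /J (ler_nat _ 2); lia.
have r2 : 2 <= rr by rewrite /rr (ler_nat _ 2); lia.
have F0 : 0 <= F by rewrite /F ler0n.
have k0 : 0 <= kk by rewrite /kk ler0n.
have Ri0 : 0 <= rr ^+ i by apply: exprn_ge0.
pose FR := F * rr ^+ i.
have FR0 : 0 <= FR by apply: mulr_ge0.
have hW2 : 2 * kk ^+ 2 * (rr - 1) * (FR * (rr - S)) <= 2 * kk ^+ 2 * (rr - 1) * (rr * (kk ^+ i * G)).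
  apply: ler_wpM2l => //; apply: mulr_ge0; [apply: mulr_ge0; [lra|apply: exprn_ge0 => //]|lra].
have hb : 0 <= FR * kk * (2 * rr ^+ 2 - 2 * kk + kk * J * (kk + 1 - rr)).
  apply: mulr_ge0; first by apply: mulr_ge0.
  have : 0 <= (J - 2) * (kk * (kk + 1 - rr)).
    apply: mulr_ge0; first lra.
    apply: mulr_ge0 => //; lra.
  nra.
rewrite /FR in hW2 hb; rewrite JS in hb *.
lra.
Qed.

Lemma termTn (K i r : nat) : (i <= K)%N -> (r <= K.+2)%N ->
  (2 * 'C(K.+2, i.+2) * r ^ i.+2 <=
   2 * (K.+2) ^ i.+2 * 'C(r, i.+2) + (K.+2) ^ 3 * 'C(K, i) * r ^ i)%N.
Proof.
move=> iK rK.
rewrite -(leq_pmul2r (fact_gt0 i.+2)).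
have e1 : ('C(K.+2, i.+2) * (i.+2)`! = K.+2 * K.+1 * K ^_ i)%N.
  by rewrite bin_ffact !ffactnS /= mulnA.
have e3 : ('C(K, i) * (i.+2)`! = K ^_ i * (i.+2 * i.+1))%N.
  by rewrite !factS -bin_ffact; ring.
have -> : (2 * 'C(K.+2, i.+2) * r ^ i.+2 * (i.+2)`! = 2 * (K.+2 * K.+1 * K ^_ i) * r ^ i.+2)%N.
  by rewrite -e1; ring.
have -> : ((2 * K.+2 ^ i.+2 * 'C(r, i.+2) + K.+2 ^ 3 * 'C(K, i) * r ^ i) * (i.+2)`!
   = 2 * K.+2 ^ i.+2 * r ^_ i.+2 + K.+2 ^ 3 * (K ^_ i * (i.+2 * i.+1)) * r ^ i)%N.
  by rewrite -e3 -bin_ffact; ring.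
case: (leqP r i.+1) => hr.
  rewrite (@ffact_small r i.+2) // muln0 add0n.
  have -> : (r ^ i.+2 = r ^ i * (r * r))%N by rewrite !expnS; ring.
  have H : (2 * (K.+2 * K.+1) * (r * r) <= K.+2 ^ 3 * (i.+2 * i.+1))%N.
    have h1 : (r * r <= i.+1 * K.+2)%N by apply: leq_mul.
    have h2 : (2 * K.+1 <= K.+2 * i.+2)%N by nia.
    nia.
  have := leq_mul (leqnn (K ^_ i * r ^ i)) H.
  by move=> h; apply: (leq_trans _ (leq_trans h _)); rewrite leq_eqVlt; apply/orP; left; apply/eqP; ring.
rewrite !ffactnS.
rewrite -(ler_nat rat) !(natrD, natrM, natrX).
have := @termT_main K i r iK hr rK.
have e4 : (K.+1%:R : rat) = K.+2%:R - 1 by rewrite [X in _ = X - _]mulrSr addrK.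
have e5 : (r.-1%:R : rat) = r%:R - 1.
  by case: r hr rK => // r' _ _; rewrite /= mulrSr addrK.
have e6 : (r%:R : rat) ^+ i.+2 = r%:R ^+ i * r%:R ^+ 2 by rewrite -exprD addn2.
have e7 : (K.+2%:R : rat) ^+ i.+2 = K.+2%:R ^+ i * K.+2%:R ^+ 2 by rewrite -exprD addn2.
rewrite e4 e5 e6 e7 natrM.
move=> h; apply: (le_trans _ (le_trans h _)); rewrite le_eqVlt; apply/orP; left; apply/eqP; ring.
Qed.

End SE.

Section U.
Local Open Scope ring_scope.
Variable n : nat.
Local Notation k := n.+1.
Definition cst (f : {ffun 'I_k -> 'I_k}) := [forall j, f j == f ord0].

Lemma const_sum (F : {ffun 'I_k -> 'I_k} -> rat) :
  \sum_(f | cst f) F f = \sum_(i < k) F [ffun => i].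
Proof.
rewrite (reindex_onto (fun i : 'I_k => [ffun => i]) (fun f => f ord0)).
  apply: eq_bigl => i; rewrite ffunE eqxx andbT.
  by apply/forallP => j; rewrite !ffunE.
move=> f /forallP H; apply/ffunP => j; rewrite ffunE.
by apply/esym/eqP; apply: H.
Qed.

Definition sh (t : 'I_k) (f : {ffun 'I_k -> 'I_k}) := [ffun j => f j + t].

Lemma sh_inj t : injective (sh t).
Proof.
move=> f g /ffunP H; apply/ffunP => j; have := H j; rewrite !ffunE.
exact: addIr.
Qed.

Lemma cst_sh t f : cst (sh t f) = cst f.
Proof.
apply/forallP/forallP => H j; have := H j; rewrite ?ffunE.
  by move/eqP/addIr => ->.
by move/eqP => ->.
Qed.

Lemma upper_key (x : 'I_k -> rat) : (forall i, 0 <= x i) ->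
  \sum_i x i ^+ k + ((k ^ k)%:R - k%:R) * \prod_i x i <= (\sum_i x i) ^+ k.
Proof.
move=> x0.
set P := \prod_i x i.
have P0 : 0 <= P by apply: prodr_ge0.
have -> : (\sum_i x i) ^+ k = \prod_(j < k) \sum_i x i.
  by rewrite prodr_const card_ord.
rewrite bigA_distr_bigA /= (bigID cst) /= const_sum.
have -> : \sum_(i < k) \prod_(j < k) x ([ffun => i] j) = \sum_i x i ^+ k.
  by apply: eq_bigr => i _; rewrite (eq_bigr (fun _ => x i)) ?prodr_const ?card_ord // => j _; rewrite ffunE.
rewrite lerD2l.
set m := fun f : {ffun 'I_k -> 'I_k} => \prod_(j < k) x (f j).
have m0 f : 0 <= m f by apply: prodr_ge0.
have inv t : \sum_(f | ~~ cst f) m f = \sum_(f | ~~ cst f) m (sh t f).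
  rewrite (reindex_inj (@sh_inj t)) /=.
  by apply: eq_bigl => f; rewrite cst_sh.
have orb f : k%:R * P <= \sum_(t < k) m (sh t f).
  have := @amgm 'I_k (fun t => m (sh t f)) P (fun t => m0 _) P0.
  rewrite card_ord; apply.
  rewrite /m exchange_big /=.
  have -> : P ^+ k = \prod_(j < k) P by rewrite prodr_const card_ord.
  apply: eq_bigr => j _.
  apply/esym; rewrite /P (reindex_inj (addrI (f j))) /=; apply: eq_bigr => t _.
  by rewrite ffunE.
have cnt : \sum_(f | ~~ cst f) P = ((k ^ k)%:R - k%:R) * P.
  have H : \sum_(f : {ffun 'I_k -> 'I_k}) (1:rat) = \sum_(f | cst f) 1 + \sum_(f | ~~ cst f) 1.
    by rewrite (bigID cst).
  move: H; rewrite const_sum sumr_const card_ffun card_ord sumr_const card_ord => H.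
  have -> : \sum_(f | ~~ cst f) P = (\sum_(f | ~~ cst f) (1:rat)) * P.
    by rewrite mulr_suml; apply: eq_bigr => f _; rewrite mul1r.
  by rewrite H addrC addKr.
have step : k%:R * \sum_(f | ~~ cst f) m f = \sum_(f | ~~ cst f) \sum_(t < k) m (sh t f).
  rewrite [RHS]exchange_big /=.
  under [RHS]eq_bigr => t _ do rewrite -inv.
  by rewrite sumr_const card_ord mulr_natl.
rewrite -cnt -(@ler_pM2l _ k%:R) ?ltr0n // [X in _ <= X]step mulr_sumr.
by apply: ler_sum => f _; apply: orb.
Qed.
End U.

Lemma prodexp (k q r : nat) : r <= k ->
  q ^ (k - r) * (q + 1) ^ r = \sum_(j < k.+1) 'C(r, j) * q ^ (k - j).
Proof.
move=> rk.
rewrite expnDn big_distrr /=.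
rewrite (big_ord_widen k.+1 (fun j => q ^ (k - r) * ('C(r, j) * (q ^ (r - j) * 1 ^ j)))) //.
rewrite big_mkcond /=; apply: eq_bigr => j _.
case: ifP => hj.
  rewrite exp1n muln1 mulnCA -expnD; congr (_ * (_ ^ _)); lia.
by rewrite bin_small ?muln0 //; lia.
Qed.

Lemma keyM (K q r : nat) : r <= K.+2 ->
  2 * (K.+2 * q + r) ^ K.+2 <=
  2 * K.+2 ^ K.+2 * (q ^ (K.+2 - r) * (q + 1) ^ r) + K.+2 ^ 3 * (K.+2 * q + r) ^ K.
Proof.
move=> rK.
rewrite prodexp // !expnDn.
rewrite !big_distrr /=.
rewrite (big_ord_recl K.+2) (big_ord_recl K.+1).
rewrite [X in _ <= X + _](big_ord_recl K.+2) (big_ord_recl K.+1).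
rewrite /= !bin0 !bin1 !subn0.
set A := \sum_(i < K.+1) _.
set B := \sum_(i < K.+1) _.
set C := \sum_(i < K.+1) _.
have e0 : 2 * (1 * ((K.+2 * q) ^ K.+2 * r ^ 0)) = 2 * K.+2 ^ K.+2 * (1 * q ^ K.+2).
  by rewrite expnMn; ring.
have e1 : 2 * (K.+2 * ((K.+2 * q) ^ (K.+2 - bump 0 0) * r ^ bump 0 0)) =
   2 * K.+2 ^ K.+2 * (r * q ^ (K.+2 - bump 0 0)).
  rewrite /bump /= subSS subn0 expnMn expn1 [K.+2 ^ K.+2]expnS; ring.
rewrite e0 e1 -addnA leq_add2l -addnA leq_add2l /A /B /C -big_split /=.
apply: leq_sum => i _.
have hi := ltn_ord i.
rewrite /bump /= !add1n.
have T := @termTn K i r (ltnSE hi) rK.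
have T2 := leq_mul T (leqnn (K.+2 ^ (K - i) * q ^ (K - i))).
have ep : K.+2 ^ K.+2 = K.+2 ^ i.+2 * K.+2 ^ (K - i).
  by rewrite -expnD !addSn subnKC.
rewrite subSS ep !expnMn.
apply: (leq_trans _ (leq_trans T2 _)); rewrite leq_eqVlt; apply/orP; left; apply/eqP; ring.
Qed.

Lemma sumv k q r : r <= k -> \sum_(i < k) (q + (i < r)) = k * q + r.
Proof.
move=> rk; rewrite big_split /= sum_nat_const card_ord.
congr (_ + _).
rewrite -(big_mkord xpredT (fun i => nat_of_bool (i < r))).
rewrite (@big_cat_nat _ _ _ r) //=.
rewrite (eq_big_nat _ _ (F2 := fun => 1)); last by move=> i /andP [_ ->].
rewrite [X in _ + X](eq_big_nat _ _ (F2 := fun => 0)); last first.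
  by move=> i /andP [h _]; rewrite ltnNge h.
by rewrite !sum_nat_const_nat muln0 addn0 muln1 subn0.
Qed.

Lemma prodv k q r : r <= k -> \prod_(i < k) (q + (i < r)) = q ^ (k - r) * (q + 1) ^ r.
Proof.
move=> rk.
rewrite -(big_mkord xpredT (fun i => q + (i < r))).
rewrite (@big_cat_nat _ _ _ r) //=.
rewrite (eq_big_nat _ _ (F2 := fun => q + 1)); last by move=> i /andP [_ ->].
rewrite [X in _ * X](eq_big_nat _ _ (F2 := fun => q)); last first.
  by move=> i /andP [h _]; rewrite ltnNge h addn0.
by rewrite !prod_nat_const_nat subn0 mulnC.
Qed.

Lemma sumpow k q r s : 4 <= k -> r < k -> s = k * q + r -> 0 < q ->
  2 * \sum_(i < k) (q + (i < r)) ^ (k - 2) <= s ^ (k - 2).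
Proof.
move=> hk rk hs q0.
have h1 : \sum_(i < k) (q + (i < r)) ^ (k - 2) <= \sum_(i < k) (q + (i < r)) * (q + 1) ^ (k - 3).
  apply: leq_sum => i _.
  have -> : k - 2 = (k - 3).+1 by lia.
  rewrite expnS leq_mul2l; apply/orP; right.
  by rewrite leq_exp2r; [case: (i < r); lia | lia].
rewrite -big_distrl /= sumv in h1; last by lia.
rewrite -hs in h1.
have h2 : 2 * (q + 1) <= s by nia.
have h3 : 2 * (q + 1) ^ (k - 3) <= s ^ (k - 3).
  apply: (leq_trans _ (_ : (2 * (q + 1)) ^ (k - 3) <= _)); last by rewrite leq_exp2r //; lia.
  rewrite expnMn leq_mul2r; apply/orP; right.
  by rewrite -{1}(expn1 2) leq_exp2l //; lia.
have -> : s ^ (k - 2) = s * s ^ (k - 3) by rewrite -expnS; congr (_ ^ _); lia.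
apply: (leq_trans (leq_mul (leqnn 2) h1)).
by rewrite mulnCA leq_mul2l h3 orbT.
Qed.

Section Main.
Local Open Scope ring_scope.
Variable K : nat.
Local Notation k := K.+4.
Local Notation D := ((k%:R : rat) ^+ k - k%:R).

Lemma D_gt0 : 0 < D.
Proof.
rewrite subr_gt0 -natrX ltr_nat.
have h : (k ^ 1 < k ^ k)%N by rewrite ltn_exp2l.
by rewrite expn1 in h.
Qed.

Lemma lower s : (s%:R ^+ k - k%:R ^+ 3 * s%:R ^+ (k - 2)) / D <= (g k s)%:R :> rat.
Proof.
have Dp := D_gt0.
elim/ltn_ind: s => s IH.
case: (ltnP s k) => hs.
  rewrite g_small // mulr_le0_ge0 //; last by rewrite invr_ge0 ltW.
  rewrite subr_le0 -!natrX -natrM ler_nat.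
  have -> : (s ^ k = s ^ (k - 2) * (s * s))%N.
    by rewrite mulnn -expnD subnK.
  rewrite mulnC leq_mul2r; apply/orP; right.
  by apply: (leq_trans (leq_mul (ltnW hs) (ltnW hs))); rewrite expnS expnS expn1 leq_mul2l leq_pmulr ?orbT.
pose q := (s %/ k)%N. pose r := (s %% k)%N.
have sqr : s = (k * q + r)%N by rewrite /q /r mulnC -divn_eq.
have rk : (r < k)%N by rewrite /r ltn_pmod.
have q0 : (0 < q)%N by rewrite /q divn_gt0.
have hf : forall i : 'I_k, (q + (i < r)%N < s)%N.
  by move=> i; rewrite sqr; case: (i < r)%N => /=; nia.
pose f := [ffun i : 'I_k => Ordinal (hf i)].
have fv : forall i, (f i : nat) = (q + (i < r)%N)%N by move=> i; rewrite ffunE.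
have fsum : \sum_(i < k) (f i : nat) == s.
  by rewrite (eq_bigr _ (fun i _ => fv i)) sumv ?sqr // ltnW.
have ge := @leq_bigmax_cond _ (fun f : {ffun 'I_k -> 'I_s} => \sum_(i < k) (f i : nat) == s)
  (fun f : {ffun 'I_k -> 'I_s} => \sum_(i < k) g k (f i) + \prod_(i < k) (f i : nat))%N f fsum.
rewrite g_rec //.
move: ge; rewrite -(ler_nat rat) => ge; apply: le_trans ge.
rewrite natrD natr_sum natr_prod.
pose x := fun i => (f i : nat)%:R : rat.
have IHx : \sum_(i < k) ((x i ^+ k - k%:R ^+ 3 * x i ^+ (k - 2)) / D) <= \sum_(i < k) (g k (f i))%:R.
  by apply: ler_sum => i _; apply: IH.
apply: le_trans (lerD IHx (lexx _)).
have Pdef : \prod_i ((f i : nat)%:R : rat) = ((q ^ (k - r) * (q + 1) ^ r)%N)%:R.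
  by rewrite -natr_prod (eq_bigr _ (fun i _ => fv i)) prodv // ltnW.
have amg : k%:R * \prod_i ((f i : nat)%:R : rat) <= \sum_i x i ^+ k.
  have := @amgm 'I_k (fun i => x i ^+ k) (\prod_i ((f i : nat)%:R : rat)).
  rewrite card_ord; apply.
  - by move=> i; rewrite exprn_ge0 // ler0n.
  - by apply: prodr_ge0 => i _; rewrite ler0n.
  - by rewrite prodrXl.
have c : 2 * \sum_i x i ^+ (k - 2) <= s%:R ^+ (k - 2).
  have := @sumpow k q r s isT rk sqr q0.
  rewrite -(ler_nat rat) natrM natr_sum natrX => h; apply: le_trans h.
  rewrite le_eqVlt; apply/orP; left; apply/eqP; congr (_ * _).
  by apply: eq_bigr => i _; rewrite natrX /x fv.
have d : 2 * s%:R ^+ k <= 2 * k%:R ^+ k * \prod_i ((f i : nat)%:R : rat) + k%:R ^+ 3 * s%:R ^+ (k - 2).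
  have := @keyM K.+2 q r (ltnW rk).
  rewrite -sqr -(ler_nat rat) Pdef !(natrD, natrM, natrX) /=.
  done.
have c' : k%:R ^+ 3 * (2 * \sum_i x i ^+ (k - 2)) <= k%:R ^+ 3 * s%:R ^+ (k - 2).
  by apply: ler_wpM2l => //; rewrite exprn_ge0 // ler0n.
rewrite -mulr_suml sumrB -mulr_sumr.
rewrite ler_pdivrMr // mulrDl divfK; last by rewrite gt_eqF.
move: amg c' d; set P := \prod_i _; set A := \sum_i x i ^+ k; set B := \sum_i x i ^+ (k - 2).
move=> amg c' d.
lra.
Qed.
Lemma bigmax_le_rat (I : finType) (P : pred I) (F : I -> nat) (B : rat) :
  0 <= B -> (forall i, P i -> (F i)%:R <= B) -> (\max_(i | P i) F i)%:R <= B.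
Proof.
move=> B0 H.
elim/big_ind: _ => //; first by move=> a b ha hb; rewrite /maxn; case: ifP.
Qed.

Lemma upper s : (g k s)%:R <= (s%:R ^+ k - s%:R) / D :> rat.
Proof.
have Dp := D_gt0.
have nn : forall m : nat, 0 <= (m%:R ^+ k - m%:R) / D :> rat.
  move=> m; apply: divr_ge0; last exact: ltW.
  rewrite subr_ge0 -natrX ler_nat.
  by case: m => // m; rewrite -{1}(expn1 m.+1) leq_pexp2l.
elim/ltn_ind: s => s IH.
case: (ltnP s k) => hs.
  by rewrite g_small.
rewrite g_rec //; apply: bigmax_le_rat => // f /eqP fs.
rewrite natrD natr_sum natr_prod.
pose x := fun i => (f i : nat)%:R : rat.
have IHx : \sum_(i < k) (g k (f i))%:R <= \sum_(i < k) ((x i ^+ k - x i) / D).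
  by apply: ler_sum => i _; apply: IH.
apply: le_trans (lerD IHx (lexx _)) _.
have U := @upper_key K.+3 x (fun i => ler0n _ _).
have Sx : \sum_i x i = s%:R by rewrite -fs natr_sum.
rewrite Sx natrX in U.
rewrite -mulr_suml sumrB.
rewrite ler_pdivlMr // mulrDl divfK; last by rewrite gt_eqF.
move: U; set P := \prod_i _; set A := \sum_i x i ^+ k => U.
lra.
Qed.

End Main.

Local Open Scope ring_scope.

Theorem lemma4p6 (k n : nat) (hk : (4 <= k)%N) (hn : (k * (k - 1) < n)%N) :
  ((n%:Q ^+ k - k%:Q ^+ 3 * n%:Q ^+ (k - 2)) / (k%:Q ^+ k - k%:Q) <= (g k n)%:Q)
  /\ ((g k n)%:Q <= (n%:Q ^+ k - n%:Q) / (k%:Q ^+ k - k%:Q)).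
Proof.
case: k hk hn => [|[|[|[|K]]]] // hk hn.
split; [exact: lower | exact: upper].
Qed.
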